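(* Let $p$ be a prime with $p\equiv5\pmod6$, $m$ odd, and $\Theta\in\mathrm{Aut}(R_k)$ with order dividing $p^s$. Then $x^2-x+1$ and $x^2+x+1$ are irreducible over $R_k$, $x^{6p^s}-1=(x-1)^{p^s}(x+1)^{p^s}(x^2-x+1)^{p^s}(x^2+x+1)^{p^s}$, and \[ \frac{R_k[x;\Theta]}{\langle x^{6p^s}-1\rangle}\cong\frac{R_k[x;\Theta]}{\langle (x-1)^{p^s}\rangle}\oplus\frac{R_k[x;\Theta]}{\langle (x+1)^{p^s}\rangle}\oplus\frac{R_k[x;\Theta]}{\langle (x^2-x+1)^{p^s}\rangle}\oplus\frac{R_k[x;\Theta]}{\langle (x^2+x+1)^{p^s}\rangle}. \] Consequently every skew $\Theta$-cyclic code of length $6p^s$ over $R_k$ is $\mathcal C_1\oplus\mathcal C_2\oplus\mathcal C_3\oplus\mathcal C_4$ with $\mathcal C_1$ a skew $\Theta$-cyclic code of length $p^s$, $\mathcal C_2$ a skew $\Theta$-negacyclic code of length $p^s$, and $\mathcal C_3,\mathcal C_4$ skew $(x^{2p^s}-x^{p^s}+1,\Theta)$- and $(x^{2p^s}+x^{p^s}+1,\Theta)$-polycyclic codes of length $2p^s$.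
   Context: $R_k=\mathbb{F}_{p^m}[u]/\langle u^k\rangle$; $R_k[x;\Theta]$ is the skew polynomial ring with $xa=\Theta(a)x$. Skew $(\lambda,\Theta)$-constacyclic code of length $N$: left ideal of $R_k[x;\Theta]/\langle x^N-\lambda\rangle$ ($\lambda=1$ cyclic, $\lambda=-1$ negacyclic). For a central monic $g$ of degree $N$, a skew $(g,\Theta)$-polycyclic code of length $N$ is a left ideal of $R_k[x;\Theta]/\langle g\rangle$. Note $(x^2\mp x+1)^{p^s}=x^{2p^s}\mp x^{p^s}+1$. *)

(* Defs.v *)
From HB Require Import structures.
From mathcomp Require Import all_boot all_order all_algebra.
Set Implicit Arguments. Unset Strict Implicit. Unset Printing Implicit Defensive.
Import GRing.Theory.
Local Open Scope ring_scope.

Section Skew.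
Variable R : comNzRingType.
Variable theta : R -> R.

(* Skew multiplication in R[x; theta] on coefficient sequences:
   (a x^i)(b x^j) = a theta^i(b) x^(i+j), i.e. x a = theta(a) x. *)
Definition skew_mul (f g : {poly R}) : {poly R} :=
  \sum_(i < size f) \sum_(j < size g) (f`_i * iter i theta g`_j) *: 'X^(i + j).

(* Remainder of the (left) skew division of f by a monic g:
   f = q * g + r (skew product) with size r < size g. *)
Fixpoint skew_mod_aux (fuel : nat) (f g : {poly R}) : {poly R} :=
  match fuel with
  | 0%N => f
  | fuel'.+1 =>
      if (size f < size g)%N then f
      else skew_mod_aux fuel'
             (f - skew_mul (lead_coef f *: 'X^(size f - size g)) g) g
  end.

Definition skew_mod (f g : {poly R}) : {poly R} := skew_mod_aux (size f) f g.

Definition skew_central (g : {poly R}) : Prop :=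
  forall f : {poly R}, skew_mul f g = skew_mul g f.

(* Elements of R[x;theta]/<g> are represented by their reduced
   representatives (size < size g); the product is skew_mod (skew_mul a b) g.
   C is a left ideal of R[x;theta]/<g>. *)
Definition skew_left_ideal (g : {poly R}) (C : {poly R} -> Prop) : Prop :=
  [/\ forall c, C c -> (size c < size g)%N,
      C 0,
      forall c d, C c -> C d -> C (c + d),
      forall c, C c -> C (- c)
    & forall (a c : {poly R}), (size a < size g)%N -> C c -> C (skew_mod (skew_mul a c) g)].

Definition skew_polycyclic_code (g : {poly R}) (N : nat) (C : {poly R} -> Prop)
  : Prop :=
  [/\ g \is monic, size g = N.+1, skew_central g & skew_left_ideal g C].

Definition skew_constacyclic_code (lambda : R) (N : nat) (C : {poly R} -> Prop)
  : Prop := skew_polycyclic_code ('X^N - lambda%:P) N C.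

Definition skew_cyclic_code N C := skew_constacyclic_code 1 N C.
Definition skew_negacyclic_code N C := skew_constacyclic_code (-1) N C.

(* The canonical map R[x;theta]/<G> -> (+)_i R[x;theta]/<gs i>,
   a |-> (a mod gs i)_i, is a ring isomorphism. *)
Definition skew_crt_iso (n : nat) (G : {poly R}) (gs : 'I_n -> {poly R}) : Prop :=
  [/\
      forall (a : {poly R}) i, skew_mod (skew_mod a G) (gs i) = skew_mod a (gs i),
      forall a b : {poly R}, (size a < size G)%N -> (size b < size G)%N ->
        (forall i, skew_mod a (gs i) = skew_mod b (gs i)) -> a = b,
      forall bs : 'I_n -> {poly R}, (forall i, (size (bs i) < size (gs i))%N) ->
        exists2 a : {poly R}, (size a < size G)%N & forall i, skew_mod a (gs i) = bs i,
      (forall (a b : {poly R}) i, skew_mod (a + b) (gs i) = skew_mod a (gs i) + skew_mod b (gs i))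
      /\ (forall i, skew_mod 1 (gs i) = 1)
    &
      forall (a b : {poly R}) i,
        skew_mod (skew_mod (skew_mul a b) G) (gs i)
        = skew_mod (skew_mul (skew_mod a (gs i)) (skew_mod b (gs i))) (gs i)].

End Skew.

Definition poly_unit (R : comNzRingType) (f : {poly R}) : Prop :=
  exists g : {poly R}, f * g = 1.

Definition poly_irreducible (R : comNzRingType) (f : {poly R}) : Prop :=
  [/\ f != 0, ~ poly_unit f &
      forall g h : {poly R}, f = g * h -> poly_unit g \/ poly_unit h].

Definition four_factors (R : comNzRingType) (q : nat) (i : 'I_4) : {poly R} :=
  nth 0 [:: ('X - 1) ^+ q; ('X + 1) ^+ q;
            ('X^2 - 'X + 1) ^+ q; ('X^2 + 'X + 1) ^+ q] i.

(* Main.v *)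
Require Import Defs.
From HB Require Import structures.
From mathcomp Require Import all_boot all_order all_algebra all_field zify ring.
From Stdlib Require Import IndefiniteDescription FunctionalExtensionality.
Import GRing.Theory.
Local Open Scope ring_scope.


Section SkewTheory.
Variable R : comNzRingType.
Variable Theta : {rmorphism R -> R}.

Definition thn (i : nat) (x : R) := iter i Theta x.

Lemma thn0 i : thn i 0 = 0.
Proof. by elim: i => //= i IH; rewrite /thn /= -/(thn i _) IH rmorph0. Qed.
Lemma thnD i x y : thn i (x + y) = thn i x + thn i y.
Proof. by elim: i => //= i IH; rewrite /thn /= -!/(thn i _) IH rmorphD. Qed.
Lemma thnN i x : thn i (- x) = - thn i x.
Proof. by elim: i => //= i IH; rewrite /thn /= -!/(thn i _) IH rmorphN. Qed.
Lemma thnM i x y : thn i (x * y) = thn i x * thn i y.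
Proof. by elim: i => //= i IH; rewrite /thn /= -!/(thn i _) IH rmorphM. Qed.
Lemma thn1 i : thn i 1 = 1.
Proof. by elim: i => //= i IH; rewrite /thn /= -!/(thn i _) IH rmorph1. Qed.
Lemma thnS i x : thn i.+1 x = Theta (thn i x).
Proof. by []. Qed.
Lemma thn_fix i x : Theta x = x -> thn i x = x.
Proof. by move=> h; elim: i => //= i IH; rewrite /thn /= -!/(thn i _) IH. Qed.

Definition sh (i : nat) (g : {poly R}) := 'X^i * map_poly (thn i) g.

Lemma coef_sh i g n : (sh i g)`_n = if (n < i)%N then 0 else thn i g`_(n - i).
Proof. by rewrite /sh coefXnM coef_map_id0 // thn0. Qed.

Lemma shD i f g : sh i (f + g) = sh i f + sh i g.
Proof. apply/polyP=> n; rewrite coefD !coef_sh; by case: ifP; rewrite ?addr0 // coefD thnD. Qed.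
Lemma shN i f : sh i (- f) = - sh i f.
Proof. apply/polyP=> n; rewrite coefN !coef_sh; by case: ifP; rewrite ?oppr0 // coefN thnN. Qed.
Lemma sh0 i : sh i 0 = 0.
Proof. apply/polyP=> n; rewrite coef0 !coef_sh coef0 thn0; by case: ifP. Qed.
Lemma shC i c f : sh i (c%:P * f) = (thn i c)%:P * sh i f.
Proof. apply/polyP=> n; rewrite coefCM !coef_sh; by case: ifP; rewrite ?mulr0 // coefCM thnM. Qed.
Lemma sh0g g : sh 0%N g = g.
Proof. by apply/polyP=> n; rewrite coef_sh ltn0 subn0. Qed.
Lemma shS i g : sh i.+1 g = sh 1%N (sh i g).
Proof.
apply/polyP=> n; rewrite !coef_sh; case: n => [|n] //=.
rewrite ltnS subSS subn1 /=; case: ifP => h; [by rewrite rmorph0 | done].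
Qed.
Lemma sh_sum i (I : Type) (r : seq I) (F : I -> {poly R}) :
  sh i (\sum_(j <- r) F j) = \sum_(j <- r) sh i (F j).
Proof. by apply: big_morph; [exact: shD | exact: sh0]. Qed.

Notation smul := (skew_mul Theta).

Lemma skew_mulE f g : smul f g = \sum_(i < size f) (f`_i)%:P * sh i g.
Proof.
rewrite /skew_mul; apply: eq_bigr => i _.
rewrite /sh /map_poly poly_def mulr_sumr mulr_sumr; apply: eq_bigr => j _.
by rewrite -scalerAr -exprD mul_polyC scalerA.
Qed.

Lemma skew_mul_bound (n : nat) (f g : {poly R}) : (size f <= n)%N ->
  smul f g = \sum_(i < n) (f`_i)%:P * sh i g.
Proof.
move=> hn; rewrite skew_mulE (big_ord_widen n (fun i => (f`_i)%:P * sh i g) hn).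
rewrite big_mkcond /=; apply: eq_bigr => i _; case: ifP => // /negbT.
by rewrite -leqNgt => hi; rewrite nth_default // mul0r.
Qed.

Lemma skew_mulDl f f' g : smul (f + f') g = smul f g + smul f' g.
Proof.
set n := maxn (size f) (size f').
rewrite (@skew_mul_bound n (f + f')) ?(leq_trans (size_polyD _ _)) //.
rewrite (@skew_mul_bound n f) ?leq_maxl // (@skew_mul_bound n f') ?leq_maxr //.
rewrite -big_split /=; apply: eq_bigr => i _; by rewrite coefD polyCD mulrDl.
Qed.
Lemma skew_mul0l g : smul 0 g = 0.
Proof. by rewrite skew_mulE size_poly0 big_ord0. Qed.
Lemma skew_mulNl f g : smul (- f) g = - smul f g.
Proof. by apply/eqP; rewrite -subr_eq0 opprK -skew_mulDl addNr skew_mul0l. Qed.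
Lemma skew_mulBl f f' g : smul (f - f') g = smul f g - smul f' g.
Proof. by rewrite skew_mulDl skew_mulNl. Qed.
Lemma skew_mul_suml (I : Type) (r : seq I) (F : I -> {poly R}) g :
  smul (\sum_(j <- r) F j) g = \sum_(j <- r) smul (F j) g.
Proof. by apply: (big_morph (fun f => smul f g)); [move=> *; exact: skew_mulDl | exact: skew_mul0l]. Qed.
Lemma skew_mulCl c f g : smul (c%:P * f) g = c%:P * smul f g.
Proof.
rewrite (@skew_mul_bound (size f)); last by rewrite mul_polyC size_scale_leq.
rewrite skew_mulE mulr_sumr; apply: eq_bigr => i _; by rewrite coefCM polyCM mulrA.
Qed.
Lemma skew_mulDr f g g' : smul f (g + g') = smul f g + smul f g'.
Proof. rewrite !skew_mulE -big_split /=; apply: eq_bigr => i _; by rewrite shD mulrDr. Qed.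
Lemma skew_mul0r f : smul f 0 = 0.
Proof. rewrite skew_mulE big1 // => i _; by rewrite sh0 mulr0. Qed.
Lemma skew_mulNr f g : smul f (- g) = - smul f g.
Proof. by apply/eqP; rewrite -subr_eq0 opprK -skew_mulDr addNr skew_mul0r. Qed.
Lemma skew_mulBr f g g' : smul f (g - g') = smul f g - smul f g'.
Proof. by rewrite skew_mulDr skew_mulNr. Qed.
Lemma skew_mul1l g : smul 1 g = g.
Proof. by rewrite skew_mulE size_poly1 big_ord1 coefC /= mul1r sh0g. Qed.

Lemma skew_mul_sh1 g h : smul (sh 1%N g) h = sh 1%N (smul g h).
Proof.
have hs : (size (sh 1%N g) <= (size g).+1)%N.
  apply/leq_sizeP => j hj; rewrite coef_sh; case: ifP => // _.
  by rewrite nth_default ?thn0 // subn1 -ltnS prednK //; apply: leq_ltn_trans hj.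
rewrite (@skew_mul_bound _ _ h hs) big_ord_recl coef_sh /= polyC0 mul0r add0r.
rewrite skew_mulE sh_sum; apply: eq_bigr => i _.
by rewrite coef_sh /= /bump leq0n add1n subn1 /= shC shS.
Qed.

Lemma skew_mul_sh i g h : smul (sh i g) h = sh i (smul g h).
Proof.
elim: i g => [|i IH] g; first by rewrite !sh0g.
by rewrite shS skew_mul_sh1 IH -shS.
Qed.

Lemma skew_mulA f g h : smul (smul f g) h = smul f (smul g h).
Proof.
rewrite (skew_mulE f g) skew_mul_suml [RHS]skew_mulE; apply: eq_bigr => i _.
by rewrite skew_mulCl skew_mul_sh.
Qed.

Section Division.
Variable g : {poly R}.
Hypothesis gmon : g \is monic.

Definition Mg (f : {poly R}) := exists q, f = smul q g.

Lemma Mg0 : Mg 0. Proof. by exists 0; rewrite skew_mul0l. Qed.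
Lemma MgD (a b : {poly R}) : Mg a -> Mg b -> Mg (a + b).
Proof. by move=> [q ->] [q' ->]; exists (q + q'); rewrite skew_mulDl. Qed.
Lemma MgN (a : {poly R}) : Mg a -> Mg (- a).
Proof. by move=> [q ->]; exists (- q); rewrite skew_mulNl. Qed.
Lemma MgB (a b : {poly R}) : Mg a -> Mg b -> Mg (a - b).
Proof. by move=> ha hb; apply: MgD => //; apply: MgN. Qed.

Lemma size_g_gt0 : (0 < size g)%N.
Proof. by rewrite size_poly_gt0 monic_neq0. Qed.

Lemma lc_g : g`_(size g).-1 = 1.
Proof. by move/monicP: gmon. Qed.

Lemma size_reduce (f : {poly R}) : (size g <= size f)%N ->
  (size (f - smul (lead_coef f *: 'X^(size f - size g)) g)%R < size f)%N.
Proof.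
move=> hle; have hf : (0 < size f)%N by apply: leq_trans size_g_gt0 hle.
set d := (size f - size g)%N.
have -> : smul (lead_coef f *: 'X^d) g = (lead_coef f)%:P * sh d g.
  rewrite -mul_polyC skew_mulCl; congr (_ * _).
  rewrite (@skew_mul_bound d.+1) ?size_polyXn // big_ord_recr /=.
  rewrite big1 ?add0r ?coefXn ?eqxx ?mul1r //.
  by move=> i _; rewrite coefXn ltn_eqF ?mul0r.
apply: leq_ltn_trans (_ : _ <= (size f).-1)%N _; last by rewrite prednK.
apply/leq_sizeP => j hj; rewrite coefB coefCM coef_sh.
have hdj : (d <= j)%N by rewrite /d; move: size_g_gt0 hj; lia.
rewrite ltnNge hdj /=.
case: (ltngtP j (size f).-1) => hj2.
- by move: hj hj2; lia.
- rewrite !nth_default ?thn0 ?mulr0 ?subr0 //; rewrite /d; clear -hle hf hj2; move: hle hf hj2; set a := size f; set b := size g; lia.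
- rewrite hj2 /lead_coef.
  have -> : ((size f).-1 - d)%N = (size g).-1 by rewrite /d; move: hle size_g_gt0; lia.
  by rewrite lc_g thn1 mulr1 subrr.
Qed.

Lemma mod_aux (n : nat) (f : {poly R}) : (size f < n + size g)%N ->
  (size (skew_mod_aux Theta n f g) < size g)%N /\ Mg (f - skew_mod_aux Theta n f g).
Proof.
elim: n f => [|n IH] f /= hf.
  by split => //; rewrite subrr; exact: Mg0.
case: ifP => hlt.
  by split => //; rewrite subrr; exact: Mg0.
have hle : (size g <= size f)%N by rewrite leqNgt hlt.
have hr := size_reduce f hle.
have hsz : (size f <= n + size g)%N by move: hf; rewrite addSn ltnS.
have [h1 h2] := IH _ (leq_trans hr hsz).
split => //.
set f' := _ - _ in hr h1 h2 *.
have -> : f - skew_mod_aux Theta n f' g = (f - f') + (f' - skew_mod_aux Theta n f' g).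
  by ring.
apply: MgD => //; rewrite /f' opprB addrC subrK.
by exists (lead_coef f *: 'X^(size f - size g)).
Qed.

Lemma mod_spec (f : {poly R}) : (size (skew_mod Theta f g) < size g)%N /\ Mg (f - skew_mod Theta f g).
Proof. apply: mod_aux; rewrite -{1}[size f]addn0 ltn_add2l; exact: size_g_gt0. Qed.

Lemma Mg_uniq (r : {poly R}) : Mg r -> (size r < size g)%N -> r = 0.
Proof.
move=> [q ->] hs.
case hq: (size q) => [|a].
  by move/eqP: hq; rewrite size_poly_eq0 => /eqP ->; rewrite skew_mul0l.
exfalso.
have hq0 : lead_coef q != 0.
  by rewrite lead_coef_eq0 -size_poly_eq0 hq.
set N := (a + (size g).-1)%N.
have hc : (smul q g)`_N = lead_coef q.
  rewrite skew_mulE coef_sum hq big_ord_recr /= big1 ?add0r.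
    rewrite coefCM coef_sh ltnNge leq_addr /= /N addKn lc_g thn1 mulr1.
    by rewrite /lead_coef hq.
  move=> i _; rewrite coefCM coef_sh; case: ifP; rewrite ?mulr0 //.
  move=> _; rewrite [g`_ _]nth_default ?thn0 ?mulr0 //.
  have := ltn_ord i; rewrite /N; move: size_g_gt0; set b := size g; lia.
move: hq0; rewrite -hc nth_default ?eqxx //.
move: hs; rewrite /N; set c := size (skew_mul _ _ _); move: size_g_gt0; set b := size g; lia.
Qed.

Lemma mod_char (f r : {poly R}) : (size r < size g)%N -> Mg (f - r) -> skew_mod Theta f g = r.
Proof.
move=> hr hfr; have [hs hm] := mod_spec f.
apply/eqP; rewrite -subr_eq0; apply/eqP; apply: Mg_uniq.
  have -> : skew_mod Theta f g - r = (f - r) - (f - skew_mod Theta f g).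
    by ring.
  exact: MgB.
by apply: leq_ltn_trans (size_polyD _ _) _; rewrite size_polyN gtn_max hs hr.
Qed.

Lemma mod_eq (f1 f2 : {poly R}) : Mg (f1 - f2) -> skew_mod Theta f1 g = skew_mod Theta f2 g.
Proof.
move=> h; have [hs hm] := mod_spec f2; apply: mod_char => //.
have -> : f1 - skew_mod Theta f2 g = (f1 - f2) + (f2 - skew_mod Theta f2 g).
  by ring.
exact: MgD.
Qed.

End Division.

Section Good.
Variable q : nat.
Hypothesis thq : forall r, thn q r = r.

Lemma thn_mulq k x : thn (k * q) x = x.
Proof.
rewrite /thn iterM; elim: k => //= k IH.
by rewrite -/(thn q _) thq.
Qed.

Definition goodp (g : {poly R}) :=
  (forall i, Theta g`_i = g`_i) /\ (forall i, ~~ (q %| i)%N -> g`_i = 0).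

Lemma goodXn n : (q %| n)%N -> goodp 'X^n.
Proof.
move=> hn; split=> i; rewrite coefXn; first by rewrite rmorph_nat.
by case: eqP => // ->; rewrite hn.
Qed.
Lemma good1 : goodp 1.
Proof. by rewrite -(expr0 'X); apply: goodXn; rewrite dvdn0. Qed.
Lemma goodD (f g : {poly R}) : goodp f -> goodp g -> goodp (f + g).
Proof.
move=> [f1 f2] [g1 g2]; split=> i; rewrite coefD ?rmorphD ?f1 ?g1 //.
by move=> h; rewrite f2 ?g2 ?addr0.
Qed.
Lemma goodN (f : {poly R}) : goodp f -> goodp (- f).
Proof.
move=> [f1 f2]; split=> i; rewrite coefN ?rmorphN ?f1 //.
by move=> h; rewrite f2 ?oppr0.
Qed.
Lemma goodB (f g : {poly R}) : goodp f -> goodp g -> goodp (f - g).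
Proof. by move=> hf hg; apply: goodD => //; apply: goodN. Qed.

Lemma polyE_sum (h : {poly R}) : h = \sum_(i < size h) (h`_i)%:P * 'X^i.
Proof.
rewrite -[h in LHS]coefK poly_def; apply: eq_bigr => i _; by rewrite mul_polyC.
Qed.

Lemma good_mulr (g : {poly R}) : goodp g -> forall h, smul h g = h * g.
Proof.
move=> [g1 g2] h; rewrite skew_mulE [in RHS](polyE_sum h) mulr_suml.
apply: eq_bigr => i _; rewrite -mulrA; congr (_ * _).
apply/polyP=> n; rewrite coef_sh coefXnM; case: ifP => // _.
by rewrite thn_fix.
Qed.

Lemma good_mull (g : {poly R}) : goodp g -> forall h, smul g h = g * h.
Proof.
move=> [g1 g2] h; rewrite skew_mulE [in RHS](polyE_sum g) mulr_suml.
apply: eq_bigr => i _; rewrite -mulrA.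
case hi: (q %| i)%N; last by rewrite g2 ?hi // polyC0 !mul0r.
congr (_ * _); apply/polyP=> n; rewrite coef_sh coefXnM; case: ifP => // _.
by rewrite -(divnK hi) thn_mulq.
Qed.

Section WithG.
Variable g : {poly R}.
Hypothesis gmon : g \is monic.
Hypothesis ggood : goodp g.

Lemma MgE (f : {poly R}) : Mg g f <-> exists h, f = h * g.
Proof.
split=> [[h ->]|[h ->]]; exists h; by rewrite (@good_mulr g ggood).
Qed.

Lemma Mg_left (a f : {poly R}) : Mg g f -> Mg g (smul a f).
Proof. by move=> [h ->]; exists (smul a h); rewrite skew_mulA. Qed.

Lemma Mg_right (f b : {poly R}) : Mg g f -> Mg g (smul f b).
Proof.
move=> [h ->]; exists (smul h b).
by rewrite skew_mulA (@good_mull g ggood) mulrC -(@good_mulr g ggood) -skew_mulA.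
Qed.

Lemma g_central : skew_central Theta g.
Proof. by move=> f; rewrite (@good_mulr g ggood) (@good_mull g ggood) mulrC. Qed.

End WithG.

Section CRT.
Notation smod := (skew_mod Theta).
Variable n : nat.
Variables (G : {poly R}) (gs cof t : 'I_n -> {poly R}).
Hypothesis Gmon : G \is monic.
Hypothesis Ggood : goodp G.
Hypothesis gmon : forall i, gs i \is monic.
Hypothesis ggood : forall i, goodp (gs i).
Hypothesis hG : forall i, G = cof i * gs i.
Hypothesis hcof : forall i j, i != j -> exists h, cof j = h * gs i.
Hypothesis hbez : \sum_i t i * cof i = 1.
Hypothesis gsz : forall i, (1 < size (gs i))%N.

Lemma MgG_gs (i : 'I_n) (f : {poly R}) : Mg G f -> Mg (gs i) f.
Proof.
move/(@MgE G Ggood) => [h ->]; apply/(@MgE (gs i) (ggood i)).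
by exists (h * cof i); rewrite (hG i) mulrA.
Qed.

Lemma Mg_sum (g : {poly R}) (I : Type) (r : seq I) (P : pred I) (F : I -> {poly R}) :
  (forall i, P i -> Mg g (F i)) -> Mg g (\sum_(i <- r | P i) F i).
Proof. move=> h; apply: big_ind => //; [exact: Mg0 | exact: MgD]. Qed.

Lemma mod_sub_in (g f : {poly R}) : g \is monic -> Mg g (f - smod f g).
Proof. by move=> gm; have [] := @mod_spec g gm f. Qed.

Lemma mod_size (g f : {poly R}) : g \is monic -> (size (smod f g) < size g)%N.
Proof. by move=> gm; have [] := @mod_spec g gm f. Qed.

Lemma crt_wd (a : {poly R}) (i : 'I_n) : smod (smod a G) (gs i) = smod a (gs i).
Proof.
apply: (@mod_eq (gs i) (gmon i)); apply: MgG_gs.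
have -> : smod a G - a = - (a - smod a G) by rewrite opprB.
by apply: MgN; apply: mod_sub_in.
Qed.

Lemma crt_same_mod (a b : {poly R}) (i : 'I_n) : smod a (gs i) = smod b (gs i) -> Mg (gs i) (a - b).
Proof.
move=> h.
have -> : a - b = (a - smod a (gs i)) - (b - smod b (gs i)) by rewrite h; ring.
by apply: MgB; apply: mod_sub_in.
Qed.

Lemma crt_all_MgG (d : {poly R}) : (forall i, Mg (gs i) d) -> Mg G d.
Proof.
move=> hd.
have -> : d = \sum_i d * (t i * cof i) by rewrite -mulr_sumr hbez mulr1.
apply: Mg_sum => i _; move: (hd i); move/(@MgE (gs i) (ggood i)) => [h ->].
apply/(@MgE G Ggood); exists (h * t i); rewrite (hG i); ring.
Qed.

Lemma crt_inj (a b : {poly R}) : (size a < size G)%N -> (size b < size G)%N ->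
  (forall i, smod a (gs i) = smod b (gs i)) -> a = b.
Proof.
move=> ha hb h; apply/eqP; rewrite -subr_eq0; apply/eqP.
apply: (@Mg_uniq G Gmon); first by apply: crt_all_MgG => i; apply: crt_same_mod.
by apply: leq_ltn_trans (size_polyD _ _) _; rewrite size_polyN gtn_max ha hb.
Qed.

Lemma crt_e_in (i j : 'I_n) : i != j -> Mg (gs i) (t j * cof j).
Proof.
move=> /hcof [h ->]; apply/(@MgE (gs i) (ggood i)); exists (t j * h); by rewrite mulrA.
Qed.

Lemma crt_surj (bs : 'I_n -> {poly R}) : (forall i, (size (bs i) < size (gs i))%N) ->
  exists2 a : {poly R}, (size a < size G)%N & forall i, smod a (gs i) = bs i.
Proof.
move=> hbs; set a0 := \sum_j bs j * (t j * cof j).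
exists (smod a0 G); first exact: mod_size.
move=> i; rewrite crt_wd; apply: (@mod_char (gs i) (gmon i)) => //.
have -> : a0 - bs i = \sum_j (bs j - bs i) * (t j * cof j).
  rewrite /a0 -[bs i in LHS]mulr1 -hbez mulr_sumr -sumrB.
  by apply: eq_bigr => j _; ring.
apply: Mg_sum => j _; case: (eqVneq i j) => [<-|hij].
  by rewrite subrr mul0r; exact: Mg0.
have := @crt_e_in i j hij; move/(@MgE (gs i) (ggood i)) => [h ->].
by apply/(@MgE (gs i) (ggood i)); exists ((bs j - bs i) * h); rewrite mulrA.
Qed.

Lemma crt_add (a b : {poly R}) (i : 'I_n) : smod (a + b) (gs i) = smod a (gs i) + smod b (gs i).
Proof.
apply: (@mod_char (gs i) (gmon i)).
  apply: leq_ltn_trans (size_polyD _ _) _.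
  by rewrite gtn_max !mod_size.
have -> : a + b - (smod a (gs i) + smod b (gs i)) =
  (a - smod a (gs i)) + (b - smod b (gs i)) by ring.
by apply: MgD; apply: mod_sub_in.
Qed.

Lemma crt_one (i : 'I_n) : smod 1 (gs i) = 1.
Proof.
apply: (@mod_char (gs i) (gmon i)); first by rewrite size_poly1.
by rewrite subrr; exact: Mg0.
Qed.

Lemma crt_mul (a b : {poly R}) (i : 'I_n) :
  smod (smod (smul a b) G) (gs i) = smod (smul (smod a (gs i)) (smod b (gs i))) (gs i).
Proof.
rewrite crt_wd; apply: (@mod_eq (gs i) (gmon i)).
set ma := smod a (gs i); set mb := smod b (gs i).
have -> : smul a b - smul ma mb = smul (a - ma) b + smul ma (b - mb).
  by rewrite skew_mulBl skew_mulBr addrA subrK.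
apply: MgD.
  by apply: (@Mg_right (gs i) (ggood i)); apply: mod_sub_in.
by apply: (Mg_left); apply: mod_sub_in.
Qed.

Lemma crt_iso : skew_crt_iso Theta G gs.
Proof.
split.
- exact: crt_wd.
- exact: crt_inj.
- exact: crt_surj.
- by split; [exact: crt_add | exact: crt_one].
- exact: crt_mul.
Qed.

Hypothesis gsG : forall i, (size (gs i) <= size G)%N.

Variable C : {poly R} -> Prop.
Hypothesis hC : skew_left_ideal Theta G C.

Definition Ci (i : 'I_n) (b : {poly R}) := exists c, C c /\ smod c (gs i) = b.

Lemma Ci_ideal (i : 'I_n) : skew_left_ideal Theta (gs i) (Ci i).
Proof.
case: hC => h1 h2 h3 h4 h5.
split.
- by move=> c [c' [_ <-]]; apply: mod_size.
- exists 0; split => //; apply: (@mod_char (gs i) (gmon i)); first by rewrite size_poly0; exact: (ltn_trans _ (gsz i)).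
  by rewrite subrr; exact: Mg0.
- move=> c d [c' [hc' <-]] [d' [hd' <-]]; exists (c' + d'); split; first exact: h3.
  exact: crt_add.
- move=> c [c' [hc' <-]]; exists (- c'); split; first exact: h4.
  apply: (@mod_char (gs i) (gmon i)); first by rewrite size_polyN mod_size.
  have -> : - c' - - smod c' (gs i) = - (c' - smod c' (gs i)) by ring.
  by apply: MgN; apply: mod_sub_in.
- move=> a c ha [c' [hc' <-]].
  exists (smod (smul a c') G); split.
    by apply: h5 => //; apply: leq_trans ha (gsG i).
  rewrite crt_wd; apply: (@mod_eq (gs i) (gmon i)).
  rewrite -skew_mulBr; apply: Mg_left; exact: mod_sub_in.
Qed.

Lemma C_decomp (c : {poly R}) : (size c < size G)%N ->
  (C c <-> forall i, Ci i (smod c (gs i))).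
Proof.
case: hC => h1 h2 h3 h4 h5 hc.
split; first by move=> Cc i; exists c.
move=> hi.
set cs := fun i => proj1_sig (constructive_indefinite_description _ (hi i)).
have hcs i : C (cs i) /\ smod (cs i) (gs i) = smod c (gs i).
  by rewrite /cs; case: (constructive_indefinite_description _ _) => x [].
set d := \sum_i smod (smul (smod (t i * cof i) G) (cs i)) G.
have Cd : C d.
  rewrite /d; apply: big_ind => //.
  move=> i _; apply: h5; first exact: mod_size.
  by case: (hcs i).
suff <- : d = c by [].
apply: crt_inj => //.
  rewrite /d; apply: (big_ind (fun x : {poly R} => (size x < size G)%N)) => //.
  - by rewrite size_poly0 size_poly_gt0 monic_neq0.
  - move=> x y hx hy; apply: leq_ltn_trans (size_polyD _ _) _.
    by rewrite gtn_max hx hy.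
  - by move=> i _; apply: mod_size.
move=> j; apply: (@mod_eq (gs j) (gmon j)).
set S := \sum_i smul (t i * cof i) (cs i).
have -> : d - c = (d - S) + (S - c) by ring.
apply: MgD.
  rewrite /d /S -sumrB; apply: Mg_sum => i _.
  set X := smul (smod (t i * cof i) G) (cs i).
  have -> : smod X G - smul (t i * cof i) (cs i) =
    - (X - smod X G) + smul (smod (t i * cof i) G - t i * cof i) (cs i).
    by rewrite skew_mulBl /X; ring.
  apply: MgD; first by apply: MgN; apply: MgG_gs; apply: mod_sub_in.
  apply: (@Mg_right (gs j) (ggood j)); apply: MgG_gs.
  have -> : smod (t i * cof i) G - t i * cof i = - (t i * cof i - smod (t i * cof i) G) by ring.
  by apply: MgN; apply: mod_sub_in.
have -> : S - c = \sum_i smul (t i * cof i) (cs i - c).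
  rewrite /S -[c in LHS]skew_mul1l -hbez skew_mul_suml -sumrB.
  by apply: eq_bigr => i _; rewrite skew_mulBr.
apply: Mg_sum => i _; case: (eqVneq j i) => [<-|hji].
  apply: Mg_left; apply: crt_same_mod; by case: (hcs j).
by apply: (@Mg_right (gs j) (ggood j)); apply: (@crt_e_in j i).
Qed.

End CRT.

End Good.
End SkewTheory.


Section Irr.
Variables (k : nat) (F : finFieldType) (R : comNzRingType).
Variable phi : {rmorphism {poly F} -> R}.
Hypothesis kpos : (0 < k)%N.
Hypothesis surj : forall r : R, exists f : {poly F}, phi f = r.
Hypothesis ker : forall f : {poly F}, phi f = 0 <-> 'X^k %| f.

Lemma surj' r : exists f : {poly F}, phi f == r.
Proof. by have [f hf] := surj r; exists f; apply/eqP. Qed.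
Definition lift r := xchoose (surj' r).
Lemma liftE r : phi (lift r) = r.
Proof. exact/eqP/(xchooseP (surj' r)). Qed.

Lemma phi_eq0 f : phi f = 0 -> f.[0] = 0.
Proof.
move/ker => h; rewrite -(divpK h) hornerM hornerXn expr0n.
by case: k kpos => // n _; rewrite mulr0.
Qed.

Lemma phi_inj0 f g : phi f = phi g -> f.[0] = g.[0].
Proof.
move=> h; apply/eqP; rewrite -subr_eq0 -hornerN -hornerD; apply/eqP; apply: phi_eq0.
by rewrite rmorphB h subrr.
Qed.

Definition red r := (lift r).[0].
Lemma red_phi f : red (phi f) = f.[0].
Proof. by apply: phi_inj0; rewrite liftE. Qed.

Lemma red_zmod : GRing.zmod_morphism red.
Proof.
move=> x y; rewrite -[x]liftE -[y]liftE -rmorphB !red_phi.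
by rewrite hornerD hornerN.
Qed.
Lemma red_monoid : GRing.monoid_morphism red.
Proof.
split; first by rewrite -(rmorph1 phi) red_phi hornerC.
move=> x y; rewrite -[x]liftE -[y]liftE -rmorphM !red_phi.
by rewrite hornerM.
Qed.
HB.instance Definition _ := GRing.isZmodMorphism.Build R F red red_zmod.
HB.instance Definition _ := GRing.isMonoidMorphism.Build R F red red_monoid.

Notation t := (phi 'X).
Lemma t_nil : t ^+ k = 0.
Proof. by rewrite -rmorphXn; apply/ker; apply: dvdpp. Qed.

Definition sdiv r := phi (drop_poly 1 (lift r)).
Lemma decomp r : r = phi ((red r)%:P) + t * sdiv r.
Proof.
rewrite -{1}(liftE r) -[lift r in LHS](poly_take_drop 1) rmorphD rmorphM expr1 mulrC.
congr (phi _ + _); apply/polyP => i; rewrite coef_take_poly coefC /red horner_coef0.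
by case: i.
Qed.

Definition redp (P : {poly R}) : {poly F} := map_poly red P.

Lemma unit_lift (g : {poly R}) (c : F) : c != 0 -> redp g = c%:P ->
  Defs.poly_unit g.
Proof.
move=> c0 hg.
set u := phi (c%:P); set ui := phi (c^-1%:P).
have uui : u * ui = 1 by rewrite -rmorphM -polyCM mulfV // rmorph1.
set B := \poly_(i < size g) sdiv g`_i.
set N := t%:P * B.
have hgN : g = u%:P + N.
  apply/polyP => n; rewrite coefD coefC coefCM coef_poly.
  have hr : red g`_n = if n == 0%N then c else 0.
    by rewrite -coef_map -/(redp g) hg coefC.
  case: ltnP => hn.
    rewrite {1}[g`_n]decomp hr /u; case: (n == 0%N) => //.
    by rewrite rmorph0.
  rewrite nth_default // mulr0 addr0.
  move: hr; rewrite nth_default // rmorph0.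
  by case: (n == 0%N) => // /esym/eqP; rewrite (negbTE c0).
have hNk : N ^+ k = 0 by rewrite /N exprMn -polyC_exp t_nil polyC0 mul0r.
set M := N * ui%:P.
have hMk : M ^+ k = 0 by rewrite /M exprMn hNk mul0r.
exists (ui%:P * \sum_(i < k) (- M) ^+ i).
have e := subrX1 (- M) k.
rewrite exprNn hMk mulr0 sub0r in e.
rewrite hgN mulrA mulrDl -polyCM uui -/M.
have -> : 1%:P + M = - (- M - 1) by rewrite polyC1; ring.
by rewrite mulNr -e opprK.
Qed.

Lemma irr_lift (f : {poly R}) : size (redp f) = 3%N ->
  (forall x, ~~ root (redp f) x) -> poly_irreducible f.
Proof.
move=> hs hr.
have redpM a b : redp (a * b) = redp a * redp b by rewrite /redp rmorphM.
split.
- by apply/eqP => f0; move: hs; rewrite f0 /redp map_poly0 size_poly0.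
- move=> [g hg]; have := congr1 redp hg; rewrite redpM /redp rmorph1 -/(redp g) => e.
  have gb0 : redp g != 0 by apply/eqP => h; move: e; rewrite h mulr0 => /eqP; rewrite eq_sym oner_eq0.
  have f0 : redp f != 0 by rewrite -size_poly_eq0 hs.
  have := congr1 (fun x : {poly F} => size x) e; rewrite /= size_mul // hs size_poly1.
  by move: gb0; rewrite -size_poly_eq0; case: (size (redp g)).
- move=> g h hfgh.
  have e : redp f = redp g * redp h by rewrite hfgh redpM.
  have f0 : redp f != 0 by rewrite -size_poly_eq0 hs.
  have g0 : redp g != 0 by apply/eqP => h0; move: f0; rewrite e h0 mul0r eqxx.
  have h0 : redp h != 0 by apply/eqP => h0; move: f0; rewrite e h0 mulr0 eqxx.
  have hsz := congr1 (fun x : {poly F} => size x) e; rewrite /= in hsz; rewrite size_mul // hs in hsz.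
  have sg : (0 < size (redp g))%N by rewrite size_poly_gt0.
  have sh : (0 < size (redp h))%N by rewrite size_poly_gt0.
  case sg1 : (size (redp g) == 1%N).
    left; have [c c0 hc] := size_poly1P _ sg1; exact: unit_lift c0 hc.
  case sh1 : (size (redp h) == 1%N).
    right; have [c c0 hc] := size_poly1P _ sh1; exact: unit_lift c0 hc.
  exfalso.
  have s2 : size (redp g) = 2%N.
    move: hsz sg1 sh1 sg sh; set a := size (redp g); set b := size (redp h).
    move=> hsz /negbT sg1 /negbT sh1 sg sh; lia.
  have [x hx] := poly2_root s2.
  by move: (hr x); rewrite e rootM hx.
Qed.

Lemma redp_quad (b : int) : redp ('X^2 + b%:~R *: 'X + 1) = 'X^2 + b%:~R *: 'X + 1.
Proof.
by rewrite /redp !rmorphD /= map_polyXn map_polyZ map_polyX rmorph1 rmorph_int.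
Qed.

End Irr.


Lemma pow_mod6 (p m : nat) : (p %% 6 = 5)%N -> odd m -> ((p ^ m) %% 6 = 5)%N.
Proof.
move=> hp hm; rewrite -modnXm hp.
rewrite -(odd_double_half m) hm add1n expnS -mul2n expnM.
elim: (m./2) => // j IH.
by rewrite expnS mulnCA -modnMmr IH.
Qed.

Lemma noroot (F : finFieldType) (p m : nat) : prime p -> (p %% 6 = 5)%N -> odd m ->
  #|F| = (p ^ m)%N -> forall a : F, a ^+ 2 - a + 1 != 0.
Proof.
move=> pP p6 mo cardF a; apply/negP => /eqP h.
have charF : p \in [pchar F] := card_finPcharP cardF pP.
have a0 : a != 0 by apply/eqP => a0; move: h; rewrite a0 expr0n /= subr0 add0r => /eqP; rewrite oner_eq0.
have a6 : a ^+ 6 = 1.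
  have e : a ^+ 6 - 1 = (a ^+ 3 - 1) * (a + 1) * (a ^+ 2 - a + 1) by ring.
  by apply/eqP; rewrite -subr_eq0 e h mulr0.
have hpm := @pow_mod6 p m p6 mo.
have a5 : a ^+ 5 = a.
  have := expf_card a; rewrite cardF (divn_eq (p ^ m) 6) hpm exprD mulnC exprM a6 expr1n mul1r.
  done.
have a4 : a ^+ 4 = 1.
  apply/eqP; rewrite -subr_eq0; apply/eqP.
  have : a * (a ^+ 4 - 1) = 0 by rewrite mulrBr -exprS a5 mulr1 subrr.
  by move/eqP; rewrite mulf_eq0 (negbTE a0) /= => /eqP.
have a2 : a ^+ 2 = 1 by rewrite -a6 -[6%N]/(4 + 2)%N exprD a4 mul1r.
have e3 : (3%:R : F) = (a ^+ 2 - 1) - (a + 2%:R) * ((a ^+ 2 - 1) - (a ^+ 2 - a + 1)) by ring.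
rewrite h subr0 a2 subrr mulr0 subrr in e3.
have : (p %| 3)%N by rewrite (dvdn_pcharf charF) e3.
move/dvdn_leq => /(_ isT) hp3; move: p6; have := prime_gt1 pP; lia.
Qed.

Lemma Xn_add (S : nzRingType) (m : nat) (a : {poly S}) : (size a <= m)%N ->
  size ('X^m + a) = m.+1 /\ 'X^m + a \is monic.
Proof.
move=> ha; have hs : (size a < size ('X^m : {poly S}))%N by rewrite size_polyXn.
split; first by rewrite size_polyDl // size_polyXn.
by rewrite monicE lead_coefDl // lead_coefXn.
Qed.

Lemma size_quad (S : nzRingType) (b : S) : size ('X^2 + b *: 'X + 1 : {poly S}) = 3%N.
Proof.
have h : (size (b *: 'X + 1 : {poly S})%R <= 2)%N.
  apply: leq_trans (size_polyD _ _) _; rewrite geq_max size_poly1 andbT.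
  by apply: leq_trans (size_scale_leq _ _) _; rewrite size_polyX.
by rewrite -addrA; case: (@Xn_add S 2 _ h).
Qed.

Section Concrete.
Variables (p m s k : nat) (F : finFieldType) (R : comNzRingType).
Variable phi : {rmorphism {poly F} -> R}.
Variable Theta : {rmorphism R -> R}.
Hypotheses (pP : prime p) (p6 : (p %% 6 = 5)%N) (mo : odd m) (cardF : (#|F| = p ^ m)%N)
  (kpos : (0 < k)%N) (surj : forall r : R, exists f : {poly F}, phi f = r)
  (ker : forall f : {poly F}, phi f = 0 <-> 'X^k %| f)
  (thq0 : forall r : R, iter (p ^ s) Theta r = r).

Lemma irr1 : poly_irreducible ('X^2 - 'X + 1 : {poly R}).
Proof.
have e : ('X^2 - 'X + 1 : {poly R}) = 'X^2 + (-1)%:~R *: 'X + 1 by rewrite scaleN1r.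
rewrite e; apply: (@irr_lift k F R phi kpos surj ker); rewrite (@redp_quad k F R phi kpos surj ker) ?size_quad // => x.
rewrite /root !hornerE; have -> : ((-1)%:~R * x : F) = - x by ring.
exact: (@noroot F p m pP p6 mo cardF x).
Qed.

Lemma irr2 : poly_irreducible ('X^2 + 'X + 1 : {poly R}).
Proof.
have e : ('X^2 + 'X + 1 : {poly R}) = 'X^2 + (1%:~R) *: 'X + 1 by rewrite scale1r.
rewrite e; apply: (@irr_lift k F R phi kpos surj ker); rewrite (@redp_quad k F R phi kpos surj ker) ?size_quad // => x.
rewrite /root !hornerE; have := (@noroot F p m pP p6 mo cardF (- x)).
by rewrite (_ : (- x) ^+ 2 - - x + 1 = x ^+ 2 + x + 1 :> F) //; ring.
Qed.

Let q := (p ^ s)%N.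
Lemma q0 : (0 < q)%N. Proof. by rewrite expn_gt0 prime_gt0. Qed.
Lemma thq : forall r, thn R Theta q r = r. Proof. exact: thq0. Qed.
Lemma charF : p \in [pchar F]. Proof. exact: card_finPcharP cardF pP. Qed.
Lemma charR : p \in [pchar R].
Proof.
rewrite inE pP /= -(rmorph_nat phi) -polyC_natr (pcharf0 charF) rmorph0 //.
Qed.
Lemma charP : p \in [pchar {poly R}].
Proof. by rewrite inE pP /= -polyC_natr (pcharf0 charR) polyC0. Qed.
Lemma hq : [pchar {poly R}].-nat q.
Proof. by rewrite (eq_pnat _ (pcharf_eq charP)) pnatX pnat_id. Qed.

Notation y := ('X^q : {poly R}).
Lemma y2 : 'X^(2 * q) = y ^+ 2 :> {poly R}. Proof. by rewrite mulnC exprM. Qed.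
Lemma y6 : 'X^(6 * q) = y ^+ 6 :> {poly R}. Proof. by rewrite mulnC exprM. Qed.

Lemma f1 : ('X - 1) ^+ q = y - 1 :> {poly R}.
Proof. by rewrite (exprDn_pchar _ _ hq) (exprNn_pchar _ hq) expr1n. Qed.
Lemma f2 : ('X + 1) ^+ q = y + 1 :> {poly R}.
Proof. by rewrite (exprDn_pchar _ _ hq) expr1n. Qed.
Lemma f3 : ('X^2 - 'X + 1) ^+ q = 'X^(2 * q) - y + 1 :> {poly R}.
Proof. by rewrite !(exprDn_pchar _ _ hq) (exprNn_pchar _ hq) expr1n -exprM. Qed.
Lemma f4 : ('X^2 + 'X + 1) ^+ q = 'X^(2 * q) + y + 1 :> {poly R}.
Proof. by rewrite !(exprDn_pchar _ _ hq) expr1n -exprM. Qed.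

Lemma factorization : ('X^(6 * q) - 1 : {poly R})
  = ('X - 1) ^+ q * ('X + 1) ^+ q * ('X^2 - 'X + 1) ^+ q * ('X^2 + 'X + 1) ^+ q.
Proof. rewrite f1 f2 f3 f4 y6 y2; ring. Qed.

Definition gsy (i : 'I_4) : {poly R} :=
  nth 0 [:: y - 1; y + 1; 'X^(2 * q) - y + 1; 'X^(2 * q) + y + 1] i.

Lemma hff : four_factors R q = gsy.
Proof.
apply: functional_extensionality => -[[|[|[|[|i]]]] hi] //=.
- exact: f1.
- exact: f2.
- exact: f3.
- exact: f4.
Qed.

Definition cofy (j : 'I_4) := \prod_(i < 4 | i != j) gsy i.
Lemma hprod : ('X^(6 * q) - 1 : {poly R}) = \prod_(i < 4) gsy i.
Proof. by rewrite factorization !big_ord_recr big_ord0 /= mul1r f1 f2 f3 f4. Qed.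

Lemma hG (i : 'I_4) : ('X^(6 * q) - 1 : {poly R}) = cofy i * gsy i.
Proof. by rewrite hprod (bigD1 i) //= mulrC. Qed.

Lemma hcof (i j : 'I_4) : i != j -> exists h, cofy j = h * gsy i.
Proof.
move=> hij; rewrite /cofy (bigD1 i) /=; last by [].
by eexists; rewrite mulrC.
Qed.

Lemma six_unit : exists w : R, 6%:R * w = 1.
Proof.
have h6 : (6%:R : F) != 0.
  rewrite -(dvdn_pcharf charF); apply/negP => hd.
  have := @dvdn_leq p 6 isT hd => hp6.
  have hp5 : p = 5%N by move: hp6 p6 (prime_gt1 pP); lia.
  by move: hd; rewrite hp5.
exists (phi ((6%:R : F)^-1)%:P).
by rewrite -(rmorph_nat phi) -polyC_natr -rmorphM -polyCM mulfV // rmorph1.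
Qed.

Lemma hbez_gen (w : R) : 6%:R * w = 1 ->
  \sum_(i < 4) nth 0 [:: w%:P; - w%:P; (y - 2%:R) * w%:P; - (y + 2%:R) * w%:P] i * cofy i = 1.
Proof.
move=> hw.
rewrite !big_ord_recr big_ord0 /= add0r /cofy.
rewrite !(big_mkcond (fun i : 'I_4 => i != _)) !big_ord_recr !big_ord0 /=.
rewrite /gsy /= y2.
transitivity ((6%:R * w)%:P); last by rewrite hw.
rewrite polyCM polyC_natr; ring.
Qed.

Lemma sz_mon (i : 'I_4) : (2 <= size (gsy i) <= (2 * q).+1)%N /\ gsy i \is monic.
Proof.
have q1 := q0.
case: i => -[|[|[|[|i]]]] hi //=.
- have [-> ->] : size (y + - 1) = q.+1 /\ y + - 1 \is monic.
    by apply: Xn_add; rewrite size_polyN size_poly1.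
  by split => //; apply/andP; split; lia.
- have [-> ->] : size (y + 1) = q.+1 /\ y + 1 \is monic.
    by apply: Xn_add; rewrite size_poly1.
  by split => //; apply/andP; split; lia.
- rewrite /gsy /= -addrA.
  have [-> ->] : size ('X^(2 * q) + (- y + 1)) = (2 * q).+1 /\ 'X^(2 * q) + (- y + 1) \is monic.
    apply: Xn_add; apply: leq_trans (size_polyD _ _) _.
    by rewrite size_polyN size_polyXn size_poly1 geq_max; apply/andP; split; lia.
  by split => //; apply/andP; split; lia.
- rewrite /gsy /= -addrA.
  have [-> ->] : size ('X^(2 * q) + (y + 1)) = (2 * q).+1 /\ 'X^(2 * q) + (y + 1) \is monic.
    apply: Xn_add; apply: leq_trans (size_polyD _ _) _.
    by rewrite size_polyXn size_poly1 geq_max; apply/andP; split; lia.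
  by split => //; apply/andP; split; lia.
Qed.

Lemma G_sz_mon : size ('X^(6 * q) - 1 : {poly R}) = (6 * q).+1 /\ ('X^(6 * q) - 1 : {poly R}) \is monic.
Proof. by apply: Xn_add; rewrite size_polyN size_poly1; have := q0; lia. Qed.

Lemma gsy_good (i : 'I_4) : goodp R Theta q (gsy i).
Proof.
have hX n : goodp R Theta q 'X^(n * q) by apply: goodXn; apply: dvdn_mull.
have hy : goodp R Theta q y by rewrite -[q in 'X^q]mul1n; apply: hX.
have h2 : goodp R Theta q 'X^(2 * q) by apply: hX.
case: i => -[|[|[|[|i]]]] hi //=.
- by apply: goodB => //; apply: good1.
- by apply: goodD => //; apply: good1.
- by apply: goodD; [apply: goodB | apply: good1].
- by apply: goodD; [apply: goodD | apply: good1].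
Qed.

Lemma G_good : goodp R Theta q ('X^(6 * q) - 1).
Proof. by apply: goodB; [apply: goodXn; apply: dvdn_mull | apply: good1]. Qed.

Lemma sz_hi (i : 'I_4) : (2 <= i)%N -> size (gsy i) = (2 * q).+1.
Proof.
have q1 := q0.
case: i => -[|[|[|[|i]]]] hi //= _; rewrite /gsy /= -addrA.
- have [-> _] : size ('X^(2 * q) + (- y + 1)) = (2 * q).+1 /\ 'X^(2 * q) + (- y + 1) \is monic.
    apply: Xn_add; apply: leq_trans (size_polyD _ _) _.
    by rewrite size_polyN size_polyXn size_poly1 geq_max; apply/andP; split; lia.
  by [].
- have [-> _] : size ('X^(2 * q) + (y + 1)) = (2 * q).+1 /\ 'X^(2 * q) + (y + 1) \is monic.
    apply: Xn_add; apply: leq_trans (size_polyD _ _) _.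
    by rewrite size_polyXn size_poly1 geq_max; apply/andP; split; lia.
  by [].
Qed.

Lemma main_sec :
  [/\ poly_irreducible ('X^2 - 'X + 1 : {poly R}),
      poly_irreducible ('X^2 + 'X + 1 : {poly R}),
      ('X^(6 * p ^ s) - 1 : {poly R})
        = ('X - 1) ^+ (p ^ s) * ('X + 1) ^+ (p ^ s)
          * ('X^2 - 'X + 1) ^+ (p ^ s) * ('X^2 + 'X + 1) ^+ (p ^ s),
      skew_crt_iso Theta ('X^(6 * p ^ s) - 1) (@four_factors R (p ^ s))
    & forall C : {poly R} -> Prop,
        skew_cyclic_code Theta (6 * p ^ s) C ->
        exists C1 C2 C3 C4 : {poly R} -> Prop,
          [/\ skew_cyclic_code Theta (p ^ s) C1,
              skew_negacyclic_code Theta (p ^ s) C2,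
              skew_polycyclic_code Theta ('X^(2 * p ^ s) - 'X^(p ^ s) + 1)
                (2 * p ^ s) C3,
              skew_polycyclic_code Theta ('X^(2 * p ^ s) + 'X^(p ^ s) + 1)
                (2 * p ^ s) C4
            & forall c : {poly R}, (size c <= 6 * p ^ s)%N ->
                (C c <->
                 [/\ C1 (skew_mod Theta c ('X^(p ^ s) - 1)),
                     C2 (skew_mod Theta c ('X^(p ^ s) + 1)),
                     C3 (skew_mod Theta c ('X^(2 * p ^ s) - 'X^(p ^ s) + 1))
                   & C4 (skew_mod Theta c ('X^(2 * p ^ s) + 'X^(p ^ s) + 1))])]].
Proof.
have [G_sz G_mon] := G_sz_mon.
have gmon i := (sz_mon i).2.
have gsz i : (1 < size (gsy i))%N by case/andP: (sz_mon i).1.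
have gsG i : (size (gsy i) <= size ('X^(6 * q) - 1 : {poly R})%R)%N.
  case/andP: (sz_mon i).1 => _ h; rewrite G_sz; apply: leq_trans h _; lia.
have [w hw] := six_unit.
set tt := fun i : 'I_4 => nth 0 [:: w%:P; - w%:P; (y - 2%:R) * w%:P; - (y + 2%:R) * w%:P] i.
have hbez : \sum_i tt i * cofy i = 1 := hbez_gen w hw.
split.
- exact: irr1.
- exact: irr2.
- exact: factorization.
- rewrite hff.
  exact: (@crt_iso R Theta q thq 4 _ gsy cofy tt G_mon G_good gmon gsy_good hG hcof hbez gsz).
move=> C hcode.
have hC : skew_left_ideal Theta ('X^(6 * q) - 1) C.
  by move: hcode; rewrite /skew_cyclic_code /skew_constacyclic_code polyC1 => -[].
set Cs := Ci R Theta 4 gsy C.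
have hid i := @Ci_ideal R Theta q 4 _ gsy cofy G_mon G_good gmon gsy_good hG gsz gsG C hC i.
have hdec := @C_decomp R Theta q thq 4 _ gsy cofy tt G_mon G_good gmon gsy_good hG hcof hbez C hC.
have o1 : (1 < 4)%N by []. have o2 : (2 < 4)%N by []. have o3 : (3 < 4)%N by [].
exists (Cs ord0), (Cs (Ordinal o1)), (Cs (Ordinal o2)), (Cs (Ordinal o3)).
split.
- rewrite /skew_cyclic_code /skew_constacyclic_code /skew_polycyclic_code.
  split; [exact: monicXnsubC q0 | exact: size_XnsubC q0 | rewrite polyC1 | rewrite polyC1].
    exact: (@g_central R Theta q thq _ (gsy_good ord0)).
  exact: hid ord0.
- rewrite /skew_negacyclic_code /skew_constacyclic_code /skew_polycyclic_code polyCN opprK polyC1.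
  have [hs hm] : size (y + 1) = q.+1 /\ y + 1 \is monic by apply: Xn_add; rewrite size_poly1 q0.
  split => //.
    exact: (@g_central R Theta q thq _ (gsy_good (Ordinal o1))).
  exact: hid (Ordinal o1).
- split.
  + exact: gmon (Ordinal o2).
  + exact: sz_hi (Ordinal o2) isT.
  + exact: (@g_central R Theta q thq _ (gsy_good (Ordinal o2))).
  + exact: hid (Ordinal o2).
- split.
  + exact: gmon (Ordinal o3).
  + exact: sz_hi (Ordinal o3) isT.
  + exact: (@g_central R Theta q thq _ (gsy_good (Ordinal o3))).
  + exact: hid (Ordinal o3).
- move=> c hc.
  have hc' : (size c < size ('X^(6 * q) - 1 : {poly R})%R)%N by rewrite G_sz ltnS.
  rewrite (hdec c hc'); split.
    by move=> h; split; [exact: h ord0 | exact: h (Ordinal o1) | exact: h (Ordinal o2) | exact: h (Ordinal o3)].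
  case=> h0 h1 h2 h3; case=> -[|[|[|[|i]]]] hi //=.
Qed.

End Concrete.

Theorem mainTheorem16
  (p m s k : nat) (F : finFieldType) (R : comNzRingType)
  (phi : {rmorphism {poly F} -> R}) (Theta : {rmorphism R -> R}) :
  prime p -> (p %% 6 = 5)%N -> odd m -> (#|F| = p ^ m)%N ->
  (0 < k)%N ->
  (* R = R_k = F_{p^m}[u]/<u^k>, presented via phi : F[u] ->> R with kernel <u^k> *)
  (forall r : R, exists f : {poly F}, phi f = r) ->
  (forall f : {poly F}, phi f = 0 <-> 'X^k %| f) ->
  (* Theta is a ring automorphism of R whose order divides p^s *)
  bijective Theta ->
  (forall r : R, iter (p ^ s) Theta r = r) ->
  [/\ poly_irreducible ('X^2 - 'X + 1 : {poly R}),
      poly_irreducible ('X^2 + 'X + 1 : {poly R}),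
      ('X^(6 * p ^ s) - 1 : {poly R})
        = ('X - 1) ^+ (p ^ s) * ('X + 1) ^+ (p ^ s)
          * ('X^2 - 'X + 1) ^+ (p ^ s) * ('X^2 + 'X + 1) ^+ (p ^ s),
      skew_crt_iso Theta ('X^(6 * p ^ s) - 1) (@four_factors R (p ^ s))
    & forall C : {poly R} -> Prop,
        skew_cyclic_code Theta (6 * p ^ s) C ->
        exists C1 C2 C3 C4 : {poly R} -> Prop,
          [/\ skew_cyclic_code Theta (p ^ s) C1,
              skew_negacyclic_code Theta (p ^ s) C2,
              skew_polycyclic_code Theta ('X^(2 * p ^ s) - 'X^(p ^ s) + 1)
                (2 * p ^ s) C3,
              skew_polycyclic_code Theta ('X^(2 * p ^ s) + 'X^(p ^ s) + 1)
                (2 * p ^ s) C4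
            & forall c : {poly R}, (size c <= 6 * p ^ s)%N ->
                (C c <->
                 [/\ C1 (skew_mod Theta c ('X^(p ^ s) - 1)),
                     C2 (skew_mod Theta c ('X^(p ^ s) + 1)),
                     C3 (skew_mod Theta c ('X^(2 * p ^ s) - 'X^(p ^ s) + 1))
                   & C4 (skew_mod Theta c ('X^(2 * p ^ s) + 'X^(p ^ s) + 1))])]].
Proof. move=> H1 H2 H3 H4 H5 H6 H7 H8 H9. exact: (@main_sec p m s k F R phi Theta H1 H2 H3 H4 H5 H6 H7 H9). Qed.
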